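(* Let $(X,d^\star)$ be a complete $\star$-metric space and let $A_1,A_2,\dots$ be a sequence of dense open subsets of $X$. Then $\bigcap_{n=1}^\infty A_n$ is dense in $X$.
   Context: A $t$-definer is a function $\star:[0,\infty)\times[0,\infty)\to[0,\infty)$ such that for all $a,b,c\ge 0$: $a\star b=b\star a$; $a\star(b\star c)=(a\star b)\star c$; if $a\le b$ then $a\star c\le b\star c$; $a\star 0=a$; and $\star$ is continuous in its first variable with respect to the Euclidean topology. Given a nonempty set $X$ and a $t$-definer $\star$, a $\star$-metric on $X$ is a function $d^\star:X\times X\to[0,\infty)$ such that for all $x,y,z\in X$: $d^\star(x,y)=0$ iff $x=y$; $d^\star(x,y)=d^\star(y,x)$; and $d^\star(x,y)\le d^\star(x,z)\star d^\star(z,y)$. Topological notions refer to the topology consisting of all $U\subseteq X$ such that for each $a\in U$ there is $r>0$ with $\{x: d^\star(a,x)<r\}\subseteq U$. A sequence $\{x_n\}$ is Cauchy if for every $\epsilon>0$ there is $k$ with $d^\star(x_n,x_m)<\epsilon$ for all $m,n\ge k$; it converges to $x$ if for every $\epsilon>0$ there is $k$ with $d^\star(x,x_n)<\epsilon$ for $n\ge k$. $(X,d^\star)$ is complete if every Cauchy sequence converges to a point of $X$. *)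

(* Defs.v *)
From Stdlib Require Import Reals.
Open Scope R_scope.

(* A t-definer on [0,oo): represented as a function R -> R -> R whose
   axioms are required only on nonnegative arguments. *)
Definition t_definer (star : R -> R -> R) : Prop :=
  (forall a b, 0 <= a -> 0 <= b -> 0 <= star a b) /\
  (forall a b, 0 <= a -> 0 <= b -> star a b = star b a) /\
  (forall a b c, 0 <= a -> 0 <= b -> 0 <= c ->
      star a (star b c) = star (star a b) c) /\
  (forall a b c, 0 <= a -> 0 <= b -> 0 <= c -> a <= b -> star a c <= star b c) /\
  (forall a, 0 <= a -> star a 0 = a) /\
  (forall b a, 0 <= b -> 0 <= a ->
     forall eps, 0 < eps -> exists delta, 0 < delta /\
       forall x, 0 <= x -> Rabs (x - a) < delta ->
         Rabs (star x b - star a b) < eps).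

Definition star_metric {X : Type} (star : R -> R -> R) (d : X -> X -> R) : Prop :=
  (forall x y, 0 <= d x y) /\
  (forall x y, d x y = 0 <-> x = y) /\
  (forall x y, d x y = d y x) /\
  (forall x y z, d x y <= star (d x z) (d z y)).

Definition sopen {X : Type} (d : X -> X -> R) (U : X -> Prop) : Prop :=
  forall a, U a -> exists r, 0 < r /\ forall x, d a x < r -> U x.

Definition sclosure {X : Type} (d : X -> X -> R) (A : X -> Prop) (x : X) : Prop :=
  forall U, sopen d U -> U x -> exists y, U y /\ A y.

Definition sdense {X : Type} (d : X -> X -> R) (A : X -> Prop) : Prop :=
  forall x, sclosure d A x.

Definition scauchy {X : Type} (d : X -> X -> R) (u : nat -> X) : Prop :=
  forall eps, 0 < eps -> exists k, forall m n, (k <= m)%nat -> (k <= n)%nat ->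
    d (u n) (u m) < eps.

Definition sconverges {X : Type} (d : X -> X -> R) (u : nat -> X) (x : X) : Prop :=
  forall eps, 0 < eps -> exists k, forall n, (k <= n)%nat -> d x (u n) < eps.

Definition scomplete {X : Type} (d : X -> X -> R) : Prop :=
  forall u, scauchy d u -> exists x, sconverges d u x.

(* Main.v *)
Require Import Defs.
From Stdlib Require Import Reals.
From Stdlib Require Import ZArith Lra Lia ClassicalEpsilon.
Open Scope R_scope.

Section S.
Variable star : R -> R -> R.
Hypothesis Hstar : t_definer star.

Lemma star_comm a b : 0 <= a -> 0 <= b -> star a b = star b a.
Proof. destruct Hstar as (_&H&_). apply H. Qed.

Lemma star_mono1 a b c : 0 <= a -> 0 <= b -> 0 <= c -> a <= b -> star a c <= star b c.
Proof. destruct Hstar as (_&_&_&H&_). apply H. Qed.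

Lemma star_mono2 a b c : 0 <= a -> 0 <= b -> 0 <= c -> b <= c -> star a b <= star a c.
Proof.
  intros. rewrite (star_comm a b), (star_comm a c) by lra. apply star_mono1; lra.
Qed.

Lemma star_0 a : 0 <= a -> star 0 a = a.
Proof.
  intros Ha. destruct Hstar as (_&_&_&_&H&_). rewrite star_comm by lra. apply H; lra.
Qed.

Lemma cont2 r eps : 0 <= r -> 0 < eps -> exists del, 0 < del /\
  forall e, 0 <= e -> e < del -> star r e < r + eps.
Proof.
  intros Hr He. destruct Hstar as (_&_&_&_&_&H).
  destruct (H r 0 Hr (Rle_refl 0) eps He) as [del [Hd Hx]].
  exists del; split; auto. intros e He0 Hed.
  specialize (Hx e He0). rewrite star_0 in Hx by lra.
  rewrite star_comm by lra.
  assert (Rabs (e - 0) < del) by (rewrite Rminus_0_r, Rabs_right; lra).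
  specialize (Hx H0). apply Rabs_def2 in Hx. lra.
Qed.

Lemma small eps : 0 < eps -> exists del, 0 < del /\
  forall t, 0 <= t -> t < del -> star t t < eps.
Proof.
  intros He. destruct (cont2 (eps/2) (eps/2)) as [del [Hd H]]; try lra.
  exists (Rmin del (eps/2)). split. apply Rmin_glb_lt; lra.
  intros t Ht Htd. assert (t < del) by (eapply Rlt_le_trans; [apply Htd|apply Rmin_l]).
  assert (t < eps/2) by (eapply Rlt_le_trans; [apply Htd|apply Rmin_r]).
  specialize (H t Ht H0).
  assert (star t t <= star t (eps/2)) by (apply star_mono2; lra).
  rewrite (star_comm (eps/2) t) in H by lra. lra.
Qed.

End S.

Theorem theorem4p14 (X : Type) (x0 : X) (star : R -> R -> R) (d : X -> X -> R)
  (Hstar : t_definer star) (Hd : star_metric star d) (Hc : scomplete d)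
  (A : nat -> X -> Prop)
  (HAo : forall n, sopen d (A n)) (HAd : forall n, sdense d (A n)) :
  sdense d (fun x => forall n, A n x).
Proof.
  destruct Hd as (Hpos & Hzero & Hsym & Htri).
  assert (Hdd : forall x, d x x = 0) by (intro; apply Hzero; reflexivity).
  assert (ball : forall y x s, d y x < s -> exists rho, 0 < rho /\
            forall w, d x w < rho -> d y w < s).
  { intros y x s H.
    destruct (cont2 star Hstar (d y x) (s - d y x)) as [del [Hdel Hc2]];
      [apply Hpos | lra |].
    exists del; split; auto. intros w Hw.
    specialize (Htri y w x). specialize (Hc2 (d x w) (Hpos _ _) Hw). lra. }
  assert (step : forall n y s, 0 < s -> exists q : X * R, 0 < snd q /\
            snd q <= / (INR n + 1) /\
            forall w, d (fst q) w < 2 * snd q -> A n w /\ d y w < s).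
  { intros n y s Hs.
    assert (Uo : sopen d (fun w => d y w < s)).
    { intros a Ha. apply ball; auto. }
    destruct (HAd n y (fun w => d y w < s) Uo) as [z [Hz1 Hz2]].
    { rewrite Hdd; lra. }
    destruct (HAo n z Hz2) as [r1 [Hr1 H1]].
    destruct (ball y z s Hz1) as [r2 [Hr2 H2]].
    assert (Hn : 0 < / (INR n + 1)).
    { apply Rinv_0_lt_compat. pose proof (pos_INR n). lra. }
    exists (z, Rmin (Rmin r1 r2 / 2) (/ (INR n + 1))). simpl.
    split; [apply Rmin_glb_lt; [assert (0 < Rmin r1 r2) by (apply Rmin_glb_lt; lra); lra|lra]|].
    split; [apply Rmin_r|].
    intros w Hw.
    assert (Rmin (Rmin r1 r2 / 2) (/ (INR n + 1)) <= Rmin r1 r2 / 2) by apply Rmin_l.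
    pose proof (Rmin_l r1 r2). pose proof (Rmin_r r1 r2).
    split; [apply H1 | apply H2]; lra. }
  assert (tot : forall n (p : X * R), exists q : X * R, 0 < snd p ->
            0 < snd q /\ snd q <= / (INR n + 1) /\
            forall w, d (fst q) w < 2 * snd q -> A n w /\ d (fst p) w < snd p).
  { intros n p. destruct (Rlt_dec 0 (snd p)) as [h|h].
    - destruct (step n (fst p) (snd p) h) as [q Hq]. exists q; auto.
    - exists p; intro; lra. }
  set (f := fun n p => proj1_sig (constructive_indefinite_description _ (tot n p))).
  assert (Hf : forall n p, 0 < snd p -> 0 < snd (f n p) /\ snd (f n p) <= / (INR n + 1) /\
            forall w, d (fst (f n p)) w < 2 * snd (f n p) -> A n w /\ d (fst p) w < snd p).
  { intros n p. unfold f. destruct (constructive_indefinite_description _ (tot n p)); simpl; auto. }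
  intros c U HU HUc.
  destruct (HU c HUc) as [r0 [Hr0 HU0]].
  set (g := nat_rect (fun _ => (X * R)%type) (c, r0) (fun n p => f n p)).
  assert (gS : forall n, g (S n) = f n (g n)) by reflexivity.
  assert (gpos : forall n, 0 < snd (g n)).
  { induction n. simpl. exact Hr0. rewrite gS. apply Hf; auto. }
  set (u := fun n => fst (g n)). set (r := fun n => snd (g n)).
  assert (P : forall n, r (S n) <= / (INR n + 1) /\
            forall w, d (u (S n)) w < 2 * r (S n) -> A n w /\ d (u n) w < r n).
  { intro n. unfold u, r. rewrite gS. destruct (Hf n (g n) (gpos n)) as (_&?&?). auto. }
  assert (nest : forall j k w, d (u (k + j)%nat) w < r (k + j)%nat -> d (u k) w < r k).
  { induction j; intros k w H.
    - rewrite Nat.add_0_r in H. exact H.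
    - apply IHj. rewrite Nat.add_succ_r in H. apply (proj2 (P _)).
      pose proof (gpos (S (k + j))). unfold r in *. lra. }
  assert (nest2 : forall k m, (k <= m)%nat -> d (u k) (u m) < r k).
  { intros k m Hkm. replace m with (k + (m - k))%nat by lia.
    apply (nest (m - k)%nat). rewrite Hdd. apply gpos. }
  assert (Hcau : scauchy d u).
  { intros eps Heps. destruct (small star Hstar eps Heps) as [del [Hdel Hs]].
    destruct (archimed (/ del)) as [Ha _].
    pose proof (Rinv_0_lt_compat _ Hdel).
    assert (Hz : (0 < Z.to_nat (up (/ del)))%nat).
    { assert (0 < up (/ del))%Z by (apply lt_0_IZR; lra). lia. }
    set (k := Z.to_nat (up (/ del))).
    exists (S k). intros m n Hm Hn.
    destruct (P k) as [Pk _].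
    assert (Hk : r (S k) < del).
    { eapply Rle_lt_trans; [apply Pk|].
      assert (IZR (up (/ del)) = INR k) by (unfold k; rewrite INR_IZR_INZ, Z2Nat.id; auto; apply le_IZR; lra).
      apply (Rmult_lt_reg_l (INR k + 1)). pose proof (pos_INR k); lra.
      rewrite Rinv_r by (pose proof (pos_INR k); lra).
      apply (Rmult_lt_reg_l (/ del)); auto.
      rewrite Rmult_1_r, <- Rmult_assoc, (Rmult_comm (/ del)), Rmult_assoc, Rinv_l by lra.
      lra. }
    pose proof (nest2 _ _ Hn) as Hn'. pose proof (nest2 _ _ Hm) as Hm'.
    pose proof (gpos (S k)). fold (r (S k)) in H0.
    assert (T1 : d (u n) (u m) <= star (d (u (S k)) (u n)) (d (u (S k)) (u m))).
    { rewrite (Hsym (u (S k)) (u n)). apply Htri. }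
    assert (T2 : star (d (u (S k)) (u n)) (d (u (S k)) (u m)) <= star (r (S k)) (d (u (S k)) (u m)))
      by (apply star_mono1; auto; try apply Hpos; lra).
    assert (T3 : star (r (S k)) (d (u (S k)) (u m)) <= star (r (S k)) (r (S k)))
      by (apply star_mono2; auto; try apply Hpos; lra).
    assert (T4 : star (r (S k)) (r (S k)) < eps) by (apply Hs; lra).
    lra. }
  destruct (Hc u Hcau) as [x Hx].
  assert (lim : forall k, d (u k) x < 2 * r k).
  { intro k. pose proof (gpos k). fold (r k) in H.
    destruct (cont2 star Hstar (r k) (r k)) as [del [Hdel Hcc]]; try lra.
    destruct (Hx del Hdel) as [m Hm].
    specialize (Hm (max k m) (Nat.le_max_r _ _)).
    specialize (nest2 k (max k m) (Nat.le_max_l _ _)).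
    specialize (Htri (u k) x (u (max k m))). rewrite (Hsym (u (max k m)) x) in Htri.
    specialize (Hcc _ (Hpos _ _) Hm).
    assert (star (d (u k) (u (max k m))) (d x (u (max k m))) <=
            star (r k) (d x (u (max k m)))) by (apply star_mono1; auto; lra).
    lra. }
  exists x. split.
  - apply HU0. change c with (u 0%nat). change r0 with (r 0%nat).
    apply (proj2 (P 0%nat)). apply lim.
  - intro n. apply (proj2 (P n)). apply lim.
Qed.
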